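(* Let $M \ge 1$ be an integer, let $q_1, \ldots, q_M \in [0,1]$, and let $\tau \ge 1$. Define \[ \chi(\gamma) = q_1 + \frac{q_2}{1!}\gamma + \frac{q_3}{2!}\gamma^2 + \cdots + \frac{q_M}{(M-1)!}\gamma^{M-1} \] and, for $\gamma \ge 0$, \[ f(\gamma) = \frac{\gamma\, \chi(\gamma)\, e^{-\gamma}}{e^{-\gamma} + \tau\left(1 - e^{-\gamma}\right)}. \] If $q_1 \le 2 q_2 \le 3 q_3 \le \cdots \le M q_M$, then $f$ is unimodal on $[0,\infty)$. In particular, $f$ is unimodal whenever $M \le 2$.
   Context: A function $f:[0,\infty)\to\mathbb{R}$ is called unimodal if it has a single maximum, i.e., there exists $\gamma^* \ge 0$ such that $f$ is nondecreasing on $[0,\gamma^*]$ and nonincreasing on $[\gamma^*,\infty)$. (Here $q_L$ is interpreted as the probability that all $L$ simultaneously transmitted packets are successfully decoded, and $\tau$ is the number of time slots in a busy period, but these interpretations are not needed for the statement.) *)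

(* Defs.v *)
From Stdlib Require Import Reals Lra Lia Factorial.
Open Scope R_scope.

(* chi(g) = q_1 + q_2/1! g + ... + q_M/(M-1)! g^(M-1)
   (sum_f_R0 f n sums f 0 + ... + f n, i.e. n+1 terms; here n = M-1). *)
Definition chi (M : nat) (q : nat -> R) (g : R) : R :=
  sum_f_R0 (fun k => q (S k) / INR (fact k) * g ^ k) (M - 1).

Definition fgain (M : nat) (q : nat -> R) (tau : R) (g : R) : R :=
  g * chi M q g * exp (- g) / (exp (- g) + tau * (1 - exp (- g))).

Definition unimodal (f : R -> R) : Prop :=
  exists gs : R, 0 <= gs /\
    (forall x y, 0 <= x -> x <= y -> y <= gs -> f x <= f y) /\
    (forall x y, gs <= x -> x <= y -> f y <= f x).

(* Main.v *)
Require Import Defs.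
From Stdlib Require Import Reals Lra Lia Factorial.
From Coquelicot Require Import Coquelicot.
Open Scope R_scope.

Lemma dmul f g x df dg : is_derive f x df -> is_derive g x dg ->
  is_derive (fun t => f t * g t) x (df * g x + f x * dg).
Proof. intros. apply (is_derive_mult f g x df dg); auto. intros; apply Rmult_comm. Qed.
Lemma dplus f g x df dg : is_derive f x df -> is_derive g x dg ->
  is_derive (fun t => f t + g t) x (df + dg).
Proof. intros. apply (is_derive_plus f g x df dg); auto. Qed.
Lemma dminus f g x df dg : is_derive f x df -> is_derive g x dg ->
  is_derive (fun t => f t - g t) x (df - dg).
Proof. intros. apply (is_derive_minus f g x df dg); auto. Qed.
Lemma dconst (a x : R) : is_derive (fun _ => a) x 0.
Proof. apply (is_derive_const a x). Qed.
Lemma did (x : R) : is_derive (fun t => t) x 1.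
Proof. apply (is_derive_id x). Qed.
Lemma dexpm (x : R) : is_derive (fun t => exp (- t)) x (- exp (- x)).
Proof. 
  assert (H := is_derive_comp exp (fun t => - t) x (exp (-x)) (-1) (is_derive_exp (-x))).
  replace (- exp (- x)) with (scal (-1) (exp (-x))). apply H.
  apply (is_derive_opp (fun t => t) x 1), did.
  unfold scal; simpl; unfold mult; simpl. ring.
Qed.

Definition P (a : nat -> R) (n : nat) (x : R) : R :=
  sum_f_R0 (fun i => a i * x ^ i / INR (fact i)) n.

Lemma P_S a n x : P a (S n) x = P a n x + a (S n) * x ^ (S n) / INR (fact (S n)).
Proof. reflexivity. Qed.

Lemma fact_S_R n : INR (fact (S n)) = INR (S n) * INR (fact n).
Proof. change (fact (S n)) with ((S n) * fact n)%nat. apply mult_INR. Qed.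

Lemma P_derive a n x : is_derive (P a (S n)) x (P (fun i => a (S i)) n x).
Proof.
  induction n.
  - unfold P; simpl.
    eapply is_derive_ext.
    { intro t. instantiate (1 := fun t => a 0%nat + a 1%nat * t). simpl. field. }
    replace (a 1%nat * 1 / 1) with (0 + a 1%nat * 1) by field.
    apply dplus. apply dconst. apply is_derive_scal, did.
  - eapply is_derive_ext. { intro t. symmetry. apply P_S. }
    rewrite P_S. apply dplus; [exact IHn|].
    eapply is_derive_ext.
    { intro t. instantiate (1 := fun t => (a (S (S n)) / INR (fact (S (S n)))) * t ^ (S (S n))).
      cbv beta. assert (E: forall u v w : R, u / w * v = u * v / w) by (intros; unfold Rdiv; ring). apply E. }
    assert (Hd := is_derive_pow (fun t => t) (S (S n)) x 1 (did x)).
    apply (is_derive_scal _ _ (a (S (S n)) / INR (fact (S (S n))))) in Hd.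
    replace (a (S (S n)) * x ^ S n / INR (fact (S n))) with
      (a (S (S n)) / INR (fact (S (S n))) * (INR (S (S n)) * 1 * x ^ Init.Nat.pred (S (S n)))).
    exact Hd.
    rewrite (fact_S_R (S n)). simpl pred. field. split. apply INR_fact_neq_0.
    apply not_0_INR; lia.
Qed.

Lemma P_minus a b n x : P (fun i => a i - b i) n x = P a n x - P b n x.
Proof. induction n. unfold P; simpl; field. rewrite !P_S, IHn. field. apply INR_fact_neq_0. Qed.

Lemma P_nonneg a n x : 0 <= x -> (forall i, (i <= n)%nat -> 0 <= a i) -> 0 <= P a n x.
Proof.
  intros Hx Ha. induction n. unfold P; simpl. specialize (Ha 0%nat (le_n _)). lra.
  rewrite P_S. apply Rplus_le_le_0_compat. apply IHn; intros; apply Ha; lia.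
  unfold Rdiv. apply Rmult_le_pos. apply Rmult_le_pos. apply Ha; lia. apply pow_le; auto.
  left. apply Rinv_0_lt_compat. apply lt_0_INR, lt_O_fact.
Qed.

Lemma P_zero a n : P a n 0 = a 0%nat.
Proof. induction n. unfold P; simpl; field. rewrite P_S, IHn. rewrite pow_ne_zero by lia. unfold Rdiv. ring. Qed.
Lemma P_pattern d m x y : (forall i, (i<m)%nat -> 0 <= d i) -> d m <= 0 ->
  0 < x <= y -> P d m x <= 0 -> P d m y <= 0.
Proof.
  intros Hd Hm [Hx Hxy] HP.
  assert (Hk : x ^ m * P d m y <= y ^ m * P d m x).
  { unfold P. rewrite !scal_sum. apply sum_Rle. intros i Hi.
    assert (Hf : 0 < / INR (fact i)) by (apply Rinv_0_lt_compat, lt_0_INR, lt_O_fact).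
    destruct (Nat.eq_dec i m) as [->|Hne].
    - unfold Rdiv. right. ring.
    - assert (Hi' : (i < m)%nat) by lia.
      replace m with (i + (m - i))%nat by lia. rewrite !pow_add.
      assert (0 <= d i * / INR (fact i) * x ^ i * y ^ i).
      { apply Rmult_le_pos; [apply Rmult_le_pos; [apply Rmult_le_pos|]|]; try lra.
        apply Hd; lia. apply pow_le; lra. apply pow_le; lra. }
      assert (x ^ (m - i) <= y ^ (m - i)) by (apply pow_incr; lra).
      unfold Rdiv.
      replace (d i * y ^ i * / INR (fact i) * (x ^ i * x ^ (m - i))) with
        ((d i * / INR (fact i) * x ^ i * y ^ i) * x ^ (m - i)) by ring.
      replace (d i * x ^ i * / INR (fact i) * (y ^ i * y ^ (m - i))) with
        ((d i * / INR (fact i) * x ^ i * y ^ i) * y ^ (m - i)) by ring.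
      apply Rmult_le_compat_l; auto. }
  assert (0 < x ^ m) by (apply pow_lt; lra).
  assert (0 < y ^ m) by (apply pow_lt; lra).
  destruct (Rle_or_lt (P d m y) 0); auto.
  assert (0 < x ^ m * P d m y) by (apply Rmult_lt_0_compat; lra).
  nra.
Qed.

Lemma lead_neg d n : d n < 0 -> exists y, 0 < y /\ P d n y < 0.
Proof.
  intros Hd. destruct n as [|k].
  - exists 1. split. lra. unfold P; simpl. lra.
  - set (K := sum_f_R0 (fun i => Rabs (d i)) k).
    set (F := INR (fact (S k))).
    set (D := - d (S k)).
    assert (HK : 0 <= K) by (apply cond_pos_sum; intros; apply Rabs_pos).
    assert (HF : 0 < F) by (apply lt_0_INR, lt_O_fact).
    assert (HD : 0 < D) by (unfold D; lra).
    set (y := 1 + K * F / D).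
    assert (Hy : 1 <= y).
    { unfold y. assert (0 <= K * F / D). unfold Rdiv. apply Rmult_le_pos.
      apply Rmult_le_pos; lra. left; apply Rinv_0_lt_compat; lra. lra. }
    exists y. split. lra.
    assert (Hb : P d k y <= y ^ k * K).
    { unfold K, P. rewrite scal_sum. apply sum_Rle. intros i Hi.
      assert (Hfi : 1 <= INR (fact i)).
      { replace 1 with (INR 1) by reflexivity. apply le_INR. pose proof (lt_O_fact i). lia. }
      assert (Hyi : 0 <= y ^ i) by (apply pow_le; lra).
      assert (Hyik : y ^ i <= y ^ k) by (apply Rle_pow; auto).
      assert (H1 : d i * y ^ i <= Rabs (d i) * y ^ i)
        by (apply Rmult_le_compat_r; auto; apply Rle_abs).
      assert (H2 : 0 <= Rabs (d i) * y ^ i) by (apply Rmult_le_pos; auto; apply Rabs_pos).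
      assert (H3 : d i * y ^ i / INR (fact i) <= Rabs (d i) * y ^ i).
      { apply (Rmult_le_reg_r (INR (fact i))). lra.
        unfold Rdiv. rewrite Rmult_assoc, Rinv_l by lra. nra. }
      assert (H4 : Rabs (d i) * y ^ i <= Rabs (d i) * y ^ k)
        by (apply Rmult_le_compat_l; auto; apply Rabs_pos).
      lra. }
    rewrite P_S. fold F.
    assert (Hyk : 0 < y ^ k) by (apply pow_lt; lra).
    assert (E : d (S k) * y ^ S k / F = y ^ k * (- D / F - K)).
    { unfold y, D. simpl. field. split; lra. }
    rewrite E.
    assert (0 < y ^ k * (D / F)).
    { apply Rmult_lt_0_compat; auto. unfold Rdiv; apply Rmult_lt_0_compat; auto.
      apply Rinv_0_lt_compat; auto. }
    replace (- D / F) with (- (D / F)) by (unfold Rdiv; ring). nra.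
Qed.

Lemma neg2 c n : (forall i, (i <= n)%nat -> 0 <= c i) -> c (S n) = 0 ->
  (forall i, (i <= n)%nat -> c i = 0) \/
  exists y, 0 < y /\ P (fun i => c (S i) - c i) n y < 0.
Proof.
  induction n; intros Hc H0.
  - destruct (Req_dec (c 0%nat) 0) as [Z|NZ].
    + left. intros i Hi. replace i with 0%nat by lia. auto.
    + right. apply lead_neg. specialize (Hc 0%nat (le_n _)). lra.
  - destruct (Req_dec (c (S n)) 0) as [Z|NZ].
    + destruct IHn as [L|[y [Hy Hl]]]; auto.
      * left. intros i Hi. destruct (Nat.eq_dec i (S n)) as [->|]; auto. apply L; lia.
      * right. exists y. split; auto. rewrite P_S, H0, Z. unfold Rdiv. lra.
    + right. apply lead_neg. specialize (Hc (S n) (le_n _)). lra.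
Qed.

Lemma P_zero_coef a n x : (forall i, (i <= n)%nat -> a i = 0) -> P a n x = 0.
Proof.
  intros H. induction n. unfold P; simpl. rewrite H; auto. lra.
  rewrite P_S, IHn, H; [unfold Rdiv; ring | lia | intros; apply H; lia].
Qed.

Definition cc (M : nat) (q : nat -> R) (i : nat) : R :=
  if (i <=? M)%nat then INR i * q i else 0.

Lemma cc_in M q i : (i <= M)%nat -> cc M q i = INR i * q i.
Proof. intros H. unfold cc. apply Nat.leb_le in H. rewrite H. auto. Qed.
Lemma cc_out M q i : (M < i)%nat -> cc M q i = 0.
Proof. intros H. unfold cc. destruct (Nat.leb_spec i M). lia. auto. Qed.

Lemma sumS f n : sum_f_R0 f (S n) = sum_f_R0 f n + f (S n).
Proof. reflexivity. Qed.

Lemma L1 M q x m : (S m <= M)%nat ->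
  x * sum_f_R0 (fun k => q (S k) / INR (fact k) * x ^ k) m = P (cc M q) (S m) x.
Proof.
  induction m; intros H.
  - unfold P; simpl sum_f_R0. rewrite cc_in, cc_in by lia. simpl. field.
  - rewrite sumS, Rmult_plus_distr_l, IHm by lia. rewrite (P_S _ (S m)).
    rewrite (cc_in M q (S (S m))) by lia. f_equal.
    rewrite (fact_S_R (S m)).
    replace (x ^ S (S m)) with (x * x ^ (S m)) by reflexivity.
    field. split. apply INR_fact_neq_0. apply not_0_INR; lia.
Qed.

Lemma N_eq M q x : (1 <= M)%nat -> x * chi M q x = P (cc M q) (S M) x.
Proof.
  intros HM. destruct M as [|m]. lia. unfold chi.
  replace (S m - 1)%nat with m by lia. rewrite (P_S _ (S m)).
  rewrite (cc_out (S m) q (S (S m))) by lia. rewrite (L1 (S m) q x m) by lia. unfold Rdiv; ring.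
Qed.

Lemma mono F dF a b : 0 <= a <= b -> (forall z, 0 <= z -> is_derive F z (dF z)) ->
  (forall z, a < z < b -> 0 <= dF z) -> F a <= F b.
Proof.
  intros Hab HD Hs. destruct (Req_dec a b) as [->|Hne]. lra.
  destruct (MVT_cor2 F dF a b) as [c [Hc1 Hc2]]. lra.
  intros c Hc. apply is_derive_Reals, HD. lra.
  specialize (Hs c Hc2). nra.
Qed.

Lemma anti F dF a b : 0 <= a <= b -> (forall z, 0 <= z -> is_derive F z (dF z)) ->
  (forall z, a < z < b -> dF z <= 0) -> F b <= F a.
Proof.
  intros Hab HD Hs. destruct (Req_dec a b) as [->|Hne]. lra.
  destruct (MVT_cor2 F dF a b) as [c [Hc1 Hc2]]. lra.
  intros c Hc. apply is_derive_Reals, HD. lra.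
  specialize (Hs c Hc2). nra.
Qed.

Definition Den (tau x : R) := exp (- x) + tau * (1 - exp (- x)).
Definition Nf M q x := P (cc M q) (S M) x.
Definition N1f M q x := P (fun i => cc M q (S i)) M x.
Definition N2f m q x := P (fun i => cc (S m) q (S (S i))) m x.
Definition Sf M q tau x := N1f M q x * Den tau x - tau * Nf M q x.

Lemma Den_pos tau x : 1 <= tau -> 0 <= x -> 0 < Den tau x.
Proof.
  intros Ht Hx. unfold Den. assert (0 < exp (- x)) by apply exp_pos.
  assert (exp (- x) <= 1). { rewrite <- exp_0. destruct (Req_dec x 0) as [->|]. rewrite Ropp_0; lra. left; apply exp_increasing; lra. }
  nra.
Qed.

Lemma Den_le tau x : 1 <= tau -> Den tau x <= tau.
Proof. intros Ht. unfold Den. assert (0 < exp (- x)) by apply exp_pos. nra. Qed.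

Lemma dDen tau x : is_derive (Den tau) x ((tau - 1) * exp (- x)).
Proof.
  unfold Den. replace ((tau - 1) * exp (- x)) with (- exp (- x) + tau * (0 - - exp (-x))) by ring.
  apply dplus. apply dexpm. apply is_derive_scal. apply dminus. apply dconst. apply dexpm.
Qed.

Lemma dS m q tau x : is_derive (Sf (S m) q tau) x ((N2f m q x - N1f (S m) q x) * Den tau x).
Proof.
  unfold Sf.
  replace ((N2f m q x - N1f (S m) q x) * Den tau x) with
    ((N2f m q x * Den tau x + N1f (S m) q x * ((tau - 1) * exp (- x))) - tau * N1f (S m) q x).
  2:{ unfold Den. ring. }
  apply dminus. apply dmul. apply (P_derive (fun i => cc (S m) q (S i)) m x). apply dDen.
  apply is_derive_scal. apply (P_derive (cc (S m) q) (S m) x).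
Qed.

Lemma fg_eq M q tau x : (1 <= M)%nat ->
  fgain M q tau x = Nf M q x * exp (- x) / Den tau x.
Proof. intros HM. unfold fgain, Nf, Den. rewrite <- N_eq by auto. reflexivity. Qed.

Lemma dfg M q tau x : (1 <= M)%nat -> 1 <= tau -> 0 <= x ->
  is_derive (fgain M q tau) x (exp (- x) * Sf M q tau x / Den tau x ^ 2).
Proof.
  intros HM Ht Hx. assert (HD := Den_pos tau x Ht Hx).
  apply (is_derive_ext (fun t => Nf M q t * exp (- t) / Den tau t)). { intro t. symmetry. apply fg_eq; auto. }
  replace (exp (- x) * Sf M q tau x / Den tau x ^ 2) with
    (((N1f M q x * exp (- x) + Nf M q x * (- exp (- x))) * Den tau x
      - Nf M q x * exp (- x) * ((tau - 1) * exp (- x))) / Den tau x ^ 2).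
  2:{ apply (f_equal (fun u => u / Den tau x ^ 2)). unfold Sf, Den. ring. }
  apply (is_derive_div (fun t => Nf M q t * exp (- t)) (Den tau)). apply (dmul (Nf M q) (fun t => exp (- t))).
  destruct M. lia. apply (P_derive (cc (S M) q) (S M) x). apply dexpm. apply dDen. lra.
Qed.

Lemma cc_nonneg M q i : (forall i, (1 <= i <= M)%nat -> 0 <= q i <= 1) -> 0 <= cc M q i.
Proof.
  intros Hq. unfold cc. destruct (Nat.leb_spec i M); [|lra].
  destruct i. simpl; lra. apply Rmult_le_pos. apply pos_INR. apply Hq; lia.
Qed.

Lemma core m q tau (Hq : forall i, (1 <= i <= S m)%nat -> 0 <= q i <= 1) (Ht : 1 <= tau)
  (Hpat : forall x y, 0 < x <= y -> N2f m q x - N1f (S m) q x <= 0 ->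
      N2f m q y - N1f (S m) q y <= 0) :
  unimodal (fgain (S m) q tau).
Proof.
  set (M := S m).
  set (Sg := Sf M q tau).
  assert (HM : (1 <= M)%nat) by (unfold M; lia).
  assert (Hcc : forall i, 0 <= cc M q i) by (intros; apply cc_nonneg; auto).
  assert (HN1 : forall x, 0 <= x -> 0 <= N1f M q x).
  { intros. unfold N1f. apply P_nonneg; auto. }
  assert (HS0 : 0 <= Sg 0).
  { unfold Sg, Sf, N1f, Nf. rewrite !P_zero. unfold Den. rewrite Ropp_0, exp_0.
    rewrite (cc_in M q 0) by lia. simpl. specialize (Hcc 1%nat). lra. }
  assert (HdS : forall x, is_derive Sg x ((N2f m q x - N1f M q x) * Den tau x)).
  { intros. apply dS. }
  assert (Hpat' : forall x y, 0 <= x <= y -> Sg x < 0 -> Sg y <= 0).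
  { intros x y Hxy Hx. destruct (Rle_or_lt (Sg y) 0) as [|Hy]; auto. exfalso.
    destruct (MVT_cor2 Sg (fun t => (N2f m q t - N1f M q t) * Den tau t) x y) as [c [Hc1 Hc2]].
    { destruct (Req_dec x y) as [->|]; lra. }
    { intros c Hc. apply is_derive_Reals, HdS. }
    assert (HDc : 0 < Den tau c) by (apply Den_pos; lra).
    assert (HEc : 0 < N2f m q c - N1f M q c).
    { cbv beta in Hc1. destruct (Rle_or_lt (N2f m q c - N1f M q c) 0) as [Hl|]; auto.
      assert ((N2f m q c - N1f M q c) * Den tau c <= 0) by nra. nra. }
    destruct (Req_dec x 0) as [->|Hx0]. lra.
    destruct (MVT_cor2 Sg (fun t => (N2f m q t - N1f M q t) * Den tau t) 0 x) as [c' [Hc3 Hc4]].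
    lra. { intros c0 Hc0. apply is_derive_Reals, HdS. }
    assert (HDc' : 0 < Den tau c') by (apply Den_pos; lra).
    assert (HEc' : 0 < N2f m q c' - N1f M q c').
    { destruct (Rle_or_lt (N2f m q c' - N1f M q c') 0) as [Hle|]; auto.
      assert (N2f m q c - N1f M q c <= 0). apply (Hpat c' c). lra. exact Hle. lra. }
    assert (0 < (N2f m q c' - N1f M q c') * Den tau c') by (apply Rmult_lt_0_compat; auto).
    cbv beta in Hc3. nra. }
  destruct (neg2 (cc M q) M) as [Z|[y0 [Hy0 Hneg]]].
  { intros; auto. }
  { apply cc_out; lia. }
  - exists 0. split. lra.
    assert (Hz : forall x, fgain M q tau x = 0).
    { intros x. rewrite fg_eq by auto. unfold Nf. rewrite P_zero_coef. unfold Rdiv; ring.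
      intros i Hi. destruct (Nat.eq_dec i (S M)) as [->|]. apply cc_out; lia. apply Z; lia. }
    split; intros; rewrite !Hz; lra.
  - assert (HSy0 : Sg y0 < 0).
    { rewrite P_minus in Hneg.
      assert (E1 : Nf M q y0 = P (cc M q) M y0).
      { unfold Nf. rewrite P_S, (cc_out M q (S M)) by lia. unfold Rdiv; ring. }
      unfold Sg, Sf. rewrite E1. fold (N1f M q y0) in Hneg.
      assert (0 <= N1f M q y0) by (apply HN1; lra).
      assert (Den tau y0 <= tau) by (apply Den_le; auto).
      nra. }
    set (A := fun x => 0 <= x /\ forall z, 0 <= z <= x -> 0 <= Sg z).
    destruct (completeness A) as [b [Hub Hlub]].
    { exists y0. intros x [Hx Hz]. destruct (Rle_or_lt x y0); auto.
      specialize (Hz y0). lra. }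
    { exists 0. split. lra. intros z Hz. replace z with 0 by lra. auto. }
    assert (Hb0 : 0 <= b). { apply Hub. split. lra. intros z Hz. replace z with 0 by lra. auto. }
    assert (Hlow : forall z, 0 <= z < b -> 0 <= Sg z).
    { intros z Hz. destruct (Rle_or_lt 0 (Sg z)) as [|Hn]; auto. exfalso.
      assert (b <= z); [|lra]. apply Hlub. intros x [Hx HA].
      destruct (Rle_or_lt x z); auto. specialize (HA z). lra. }
    assert (Hhigh : forall z, b < z -> Sg z <= 0).
    { intros z Hz. destruct (Rle_or_lt (Sg z) 0) as [|Hp]; auto. exfalso.
      assert (z <= b); [|lra]. apply Hub. split. lra. intros w Hw.
      destruct (Rle_or_lt 0 (Sg w)) as [|Hn]; auto.
      specialize (Hpat' w z (conj (proj1 Hw) (proj2 Hw)) Hn). lra. }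
    exists b. split; auto. split.
    + intros x y Hx Hxy Hyb.
      apply (mono _ (fun t => exp (- t) * Sg t / Den tau t ^ 2)). lra.
      intros z Hz. apply dfg; auto.
      intros z Hz. assert (0 < Den tau z) by (apply Den_pos; lra).
      assert (0 <= Sg z) by (apply Hlow; lra).
      assert (0 < exp (- z)) by apply exp_pos.
      unfold Rdiv. apply Rmult_le_pos. apply Rmult_le_pos; lra.
      left. apply Rinv_0_lt_compat. apply pow_lt. lra.
    + intros x y Hx Hxy.
      apply (anti _ (fun t => exp (- t) * Sg t / Den tau t ^ 2)). lra.
      intros z Hz. apply dfg; auto.
      intros z Hz. assert (0 < Den tau z) by (apply Den_pos; lra).
      assert (Sg z <= 0) by (apply Hhigh; lra).
      assert (0 < exp (- z)) by apply exp_pos.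
      assert (0 < / Den tau z ^ 2) by (apply Rinv_0_lt_compat, pow_lt; lra).
      unfold Rdiv. assert (exp (- z) * Sg z <= 0) by nra. nra.
Qed.

Lemma E_eq m q x : N2f m q x - N1f (S m) q x =
  P (fun i => cc (S m) q (S (S i)) - cc (S m) q (S i)) m x.
Proof.
  rewrite P_minus. unfold N2f, N1f. rewrite (P_S _ m). rewrite (cc_out (S m) q (S (S m))) by lia.
  unfold Rdiv; ring.
Qed.

Theorem lemma1 (M : nat) (q : nat -> R) (tau : R)
  (HM : (1 <= M)%nat)
  (Hq : forall i, (1 <= i <= M)%nat -> 0 <= q i <= 1)
  (Htau : 1 <= tau) :
  ((forall k, (1 <= k)%nat -> (k < M)%nat -> INR k * q k <= INR (S k) * q (S k)) ->
     unimodal (fgain M q tau))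
  /\ ((M <= 2)%nat -> unimodal (fgain M q tau)).
Proof.
  destruct M as [|m]; [lia|].
  split.
  - intros Hmon. apply core; auto.
    intros x y Hxy Hx. rewrite E_eq in *. revert Hx. apply P_pattern; auto.
    + intros i Hi. rewrite !cc_in by lia. specialize (Hmon (S i)). 
      assert (INR (S i) * q (S i) <= INR (S (S i)) * q (S (S i))) by (apply Hmon; lia). lra.
    + rewrite cc_out, cc_in by lia. assert (0 <= q (S m)) by (apply Hq; lia).
      assert (0 <= INR (S m)) by apply pos_INR. nra.
  - intros H2. apply core; auto.
    intros x y Hxy Hx. rewrite E_eq in *.
    destruct m as [|[|m']]; [| |lia].
    + unfold P in *; simpl in *. rewrite cc_out, cc_in by lia.
      assert (0 <= q 1%nat) by (apply Hq; lia). simpl. lra.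
    + unfold P in *; simpl sum_f_R0 in *.
      rewrite (cc_out 2 q 3) in * by lia.
      assert (0 <= q 2%nat) by (apply Hq; lia).
      assert (0 <= cc 2 q 2) by (rewrite cc_in by lia; simpl; nra).
      simpl in *. nra.
Qed.
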